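(* For all integers $m\ge n\ge 2$, $$\gamma^{SLD}(K_n\times K_m)=\begin{cases} m+n-1, & n>2,\\ m, & n=2,\ m>2,\\ 4, & n=m=2.\end{cases}$$
   Context: $K_q$ is the complete graph on vertex set $\{1,\dots,q\}$. The direct product $G_1\times G_2$ has vertex set $V_1\times V_2$, with $(u_1,u_2)$ adjacent to $(v_1,v_2)$ iff $u_1v_1\in E_1$ and $u_2v_2\in E_2$. For a code (nonempty vertex subset) $C$ and vertex $v$, $I(C;v)=N[v]\cap C$, where $N[v]$ is the closed neighbourhood. A code $C$ in a graph $G$ is self-locating-dominating if for every non-codeword $u$, $I(C;u)\ne\emptyset$ and $\bigcap_{c\in I(C;u)}N[c]=\{u\}$. $\gamma^{SLD}(G)$ is the minimum size of a self-locating-dominating code in the finite graph $G$. *)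

(* Defs.v *)
From mathcomp Require Import all_boot.
Set Implicit Arguments. Unset Strict Implicit. Unset Printing Implicit Defensive.

(* A graph on a finite vertex type T is given by a symmetric irreflexive adjacency relation. *)

Definition closed_nbh (T : finType) (adj : rel T) (v : T) : {set T} :=
  [set u | (u == v) || adj v u].

Definition Iset (T : finType) (adj : rel T) (C : {set T}) (v : T) : {set T} :=
  closed_nbh adj v :&: C.

Definition self_loc_dom (T : finType) (adj : rel T) (C : {set T}) : bool :=
  (C != set0) &&
  [forall u, (u \notin C) ==>
     ((Iset adj C u != set0) &&
      ((\bigcap_(c in Iset adj C u) closed_nbh adj c) == [set u]))].

(* gamma^SLD : minimum size of a self-locating-dominating code
   (the whole vertex set is always such a code when T is nonempty) *)
Definition gamma_SLD (T : finType) (adj : rel T) : nat :=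
  \big[minn/#|T|]_(C : {set T} | self_loc_dom adj C) #|C|.

(* Complete graph K_q on vertex set 'I_q (standing for {1,...,q}) *)
Definition K_adj (q : nat) : rel 'I_q := fun i j => i != j.

Definition direct_prod (T1 T2 : finType) (adj1 : rel T1) (adj2 : rel T2) : rel (T1 * T2) :=
  fun x y => adj1 x.1 y.1 && adj2 x.2 y.2.

(* Main.v *)
Require Import Defs.
From mathcomp Require Import all_boot zify.
Set Implicit Arguments. Unset Strict Implicit. Unset Printing Implicit Defensive.

Lemma bigmin_le_seq (T: eqType) (r: seq T) (P: pred T) (F : T -> nat) x0 i :
  i \in r -> P i -> \big[minn/x0]_(j <- r | P j) F j <= F i.
Proof.
elim: r => //= a r IH; rewrite inE big_cons; case/orP => [/eqP<-|Hi] HP.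
  by rewrite HP geq_minl.
case: (P a); last exact: IH.
exact: leq_trans (geq_minr _ _) (IH Hi HP).
Qed.

Definition gadj (I J : finType) : rel (I*J) := fun x y => (x.1 != y.1) && (x.2 != y.2).
Definition CT (I J : finType) (C : {set I*J}) : {set J*I} := [set x | (x.2, x.1) \in C].
Definition rc (I J : finType) (C : {set I*J}) (i : I) := #|[set j | (i,j) \in C]|.
Definition HC (I J : finType) (C : {set I*J}) := forall a b, (a,b) \notin C ->
  forall i, i != a -> exists2 j, j != b & (i,j) \in C.

Lemma card_sum (I J : finType) (C : {set I*J}) :
  #|C| = \sum_i \sum_j ((i,j) \in C : nat).
Proof.
rewrite pair_big /= -sum1_card big_mkcond /=; apply: eq_big => // -[i j] _ /=.
by case: ((i,j) \in C).
Qed.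

Lemma card_rows (I J : finType) (C : {set I*J}) : #|C| = \sum_i rc C i.
Proof.
rewrite card_sum; apply: eq_bigr => i _.
rewrite /rc -sum1_card [RHS]big_mkcond /=; apply: eq_bigr => j _; rewrite inE.
by case: ((i,j) \in C).
Qed.

Lemma card_CT (I J : finType) (C : {set I*J}) : #|CT C| = #|C|.
Proof.
rewrite !card_sum exchange_big /=; apply: eq_bigr => i _; apply: eq_bigr => j _.
by rewrite inE.
Qed.

Lemma rc_CT (I J : finType) (C : {set I*J}) j : rc (CT C) j = #|[set i | (i,j) \in C]|.
Proof. by rewrite /rc; apply: eq_card => i; rewrite !inE. Qed.

Lemma avoid1 (I : finType) : 2 <= #|I| -> forall a : I, exists i, i != a.
Proof.
move=> H a; have: ~~ ([set: I] \subset [set a]).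
  by apply/negP => /subset_leq_card; rewrite cardsT cards1; lia.
by case/subsetPn => i _; rewrite inE => ?; exists i.
Qed.

Lemma avoid2 (I : finType) : 3 <= #|I| -> forall a x : I, exists i, (i != a) && (i != x).
Proof.
move=> H a x; have: ~~ ([set: I] \subset [set a; x]).
  apply/negP => /subset_leq_card; rewrite cardsT cards2 => H2.
  have: (a != x).+1 <= 2 by case: (a != x).
  lia.
by case/subsetPn => i _; rewrite !inE negb_or => ?; exists i.
Qed.

Lemma two_elt (I : finType) : #|I| = 2 -> forall a x z : I, x != a -> z != a -> x = z.
Proof.
move=> H a x z Hx Hz; case: (eqVneq x z) => // Hxz.
have: [set x; z] \subset [set~ a] by apply/subsetP => y; rewrite !inE => /orP[]/eqP->.
by move/subset_leq_card; rewrite cards2 cardsC1 H Hxz.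
Qed.

Lemma lb_sum (I : finType) (F : I -> nat) i0 a b :
  (forall i, i != i0 -> a <= F i) -> b <= F i0 -> b + (#|I| - 1) * a <= \sum_i F i.
Proof.
move=> Ha Hb; rewrite (bigD1 i0) //=; apply: leq_add => //.
have ->: (#|I| - 1) * a = \sum_(i | i != i0) a.
  rewrite sum_nat_cond_const; congr (_ * _).
  have ->: [set x | x != i0] = [set~ i0] by apply/setP => y; rewrite !inE.
  by rewrite cardsC1; lia.
by apply: leq_sum.
Qed.

Lemma L0 (I J : finType) (C : {set I*J}) i i' : HC C -> rc C i = 0 -> i' != i ->
  rc C i' = #|J|.
Proof.
move=> H H0 Hi; rewrite /rc -cardsT; apply: eq_card => b; rewrite !inE.
apply/negPn/negP => Hb; have [j _ Hj] := H _ _ Hb i ltac:(by rewrite eq_sym).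
by move/cards0_eq: H0 => /setP/(_ j); rewrite !inE Hj.
Qed.

Lemma L1 (I J : finType) (C : {set I*J}) i : HC C -> rc C i = 1 ->
  exists j0, forall i', (i', j0) \in C.
Proof.
move=> H /eqP/cards1P [j0 Hj0]; exists j0 => i'.
have Hi: (i, j0) \in C by move/setP: Hj0 => /(_ j0); rewrite !inE eqxx.
case: (eqVneq i' i) => [->//|Hne].
apply/negPn/negP => Hb; have [j Hj Hij] := H _ _ Hb i ltac:(by rewrite eq_sym).
by move/setP: Hj0 => /(_ j); rewrite !inE Hij (negbTE Hj).
Qed.

Lemma lower3 (I J : finType) (C : {set I*J}) : 3 <= #|I| -> #|I| <= #|J| ->
  HC C -> HC (CT C) -> #|I| + #|J| - 1 <= #|C|.
Proof.
move=> HI HIJ H HT.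
have: 0 < #|I| by lia. case/card_gt0P => i0 _. have: 0 < #|J| by lia. case/card_gt0P => j0 _.
have ER := card_rows C.
have EC : #|C| = \sum_j rc (CT C) j by rewrite -card_CT card_rows.
case: (boolP [exists i, rc C i == 0]) => [/existsP[i /eqP Hi]|/existsPn R0].
  have Hs : 0 + (#|I| - 1) * #|J| <= \sum_i rc C i.
    by apply: (@lb_sum _ _ i) => // i' h; rewrite (L0 H Hi h).
  nia.
case: (boolP [exists j, rc (CT C) j == 0]) => [/existsP[j /eqP Hj]|/existsPn C0].
  have Hs : 0 + (#|J| - 1) * #|I| <= \sum_j rc (CT C) j.
    by apply: (@lb_sum _ _ j) => // j' h; rewrite (L0 HT Hj h).
  nia.
case: (boolP [exists j, rc (CT C) j == 1]) => [/existsP[j /eqP Hj]|/existsPn C1].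
  have [i1 Hi1] := L1 HT Hj.
  have Hr : rc C i1 = #|J|.
    by rewrite /rc -cardsT; apply: eq_card => b; rewrite !inE; move: (Hi1 b); rewrite inE.
  have Hs : #|J| + (#|I| - 1) * 1 <= \sum_i rc C i.
    apply: (@lb_sum _ _ i1) => [i' _|]; last by rewrite Hr.
    by rewrite lt0n; exact: R0.
  lia.
case: (boolP [exists i, rc C i == 1]) => [/existsP[i /eqP Hi]|/existsPn R1].
  have [j1 Hj1] := L1 H Hi.
  have Hr : rc (CT C) j1 = #|I|.
    by rewrite rc_CT -cardsT; apply: eq_card => b; rewrite !inE Hj1.
  have Hs : #|I| + (#|J| - 1) * 1 <= \sum_j rc (CT C) j.
    apply: (@lb_sum _ _ j1) => [j' _|]; last by rewrite Hr.
    by rewrite lt0n; exact: C0.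
  lia.
have G2 : forall j, 2 <= rc (CT C) j.
  move=> j; move: (C0 j) (C1 j); case: (rc (CT C) j) => [|[|k]] //.
have Hs : 2 + (#|J| - 1) * 2 <= \sum_j rc (CT C) j by apply: (@lb_sum _ _ j0).
lia.
Qed.

Lemma sld_elim (I J : finType) (C : {set I*J}) u v :
  self_loc_dom (@gadj I J) C -> u \notin C -> v != u ->
  exists c, [/\ c \in C, c.1 != u.1, c.2 != u.2, c != v & (c.1 == v.1) || (c.2 == v.2)].
Proof.
move=> /andP[_ /forallP /(_ u)] /implyP HH Hu Hvu.
move/andP: (HH Hu) => [_ /eqP Hcap].
case: (pickP [pred c | (c \in Iset (@gadj I J) C u) && (v \notin closed_nbh (@gadj I J) c)])
  => [c /andP[Hc Hv] | H0].
  rewrite /Iset /closed_nbh /gadj !inE in Hc Hv.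
  case/andP: Hc => /orP[/eqP cu | /andP[h1 h2]] cC.
    by rewrite -cu cC in Hu.
  rewrite negb_or negb_and !negbK in Hv; case/andP: Hv => Hvc Hv.
  by exists c; split => //; rewrite eq_sym.
have: v \in \bigcap_(c in Iset (@gadj I J) C u) closed_nbh (@gadj I J) c.
  apply/bigcapP => c Hc; move: (H0 c); rewrite /= Hc /=; exact: negbFE.
by rewrite Hcap inE (negbTE Hvu).
Qed.

Lemma sld_intro (I J : finType) (C : {set I*J}) :
  C != set0 ->
  (forall u, u \notin C -> exists c, [/\ c \in C, c.1 != u.1 & c.2 != u.2]) ->
  (forall u v, u \notin C -> v != u ->
    exists c, [/\ c \in C, c.1 != u.1, c.2 != u.2, c != v & (c.1 == v.1) || (c.2 == v.2)]) ->
  self_loc_dom (@gadj I J) C.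
Proof.
move=> HC0 Hne Hsep; apply/andP; split => //; apply/forallP => u; apply/implyP => Hu.
apply/andP; split.
  have [c [cC h1 h2]] := Hne u Hu; apply/set0Pn; exists c.
  rewrite eq_sym in h1; rewrite eq_sym in h2.
  by rewrite /Iset /closed_nbh /gadj !inE cC h1 h2 orbT.
rewrite eqEsubset; apply/andP; split.
  apply/subsetP => v Hv; rewrite inE; apply/negPn/negP => Hvu.
  have [c [cC h1 h2 hcv hsh]] := Hsep u v Hu Hvu.
  rewrite eq_sym in h1; rewrite eq_sym in h2.
  move/bigcapP: Hv => /(_ c); rewrite /Iset /closed_nbh /gadj !inE cC h1 h2 orbT.
  move=> /(_ isT); rewrite eq_sym (negbTE hcv) /=.
  by case/orP: hsh => /eqP ->; rewrite eqxx ?andbF.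
apply/subsetP => v; rewrite inE => /eqP ->; apply/bigcapP => c.
rewrite /Iset /closed_nbh /gadj !inE => /andP[/orP[/eqP->|/andP[h1 h2]] _].
  by rewrite eqxx.
by rewrite eq_sym in h1; rewrite eq_sym in h2; rewrite h1 h2 orbT.
Qed.

Lemma sld_HC (I J : finType) (C : {set I*J}) :
  self_loc_dom (@gadj I J) C -> HC C /\ HC (CT C).
Proof.
move=> S; split.
  move=> a b Hab i Hi.
  have [[c1 c2] [cC h1 h2 hcv hsh]] := sld_elim (v := (i,b)) S Hab
     ltac:(by rewrite xpair_eqE negb_and Hi).
  simpl in *; rewrite (negbTE h2) orbF in hsh; move/eqP: hsh => E; subst.
  by exists c2.
move=> a b; rewrite inE /= => Hab i Hi.
have [[c1 c2] [cC h1 h2 hcv hsh]] := sld_elim (v := (b,i)) S Hab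
     ltac:(by rewrite xpair_eqE negb_and Hi orbT).
simpl in *; rewrite (negbTE h1) /= in hsh; move/eqP: hsh => E; subst.
by exists c1; rewrite // inE.
Qed.

Lemma lower2 (I J : finType) (C : {set I*J}) : #|I| = 2 -> 2 <= #|J| ->
  HC (CT C) -> #|J| <= #|C|.
Proof.
move=> HI HJ HT.
case: (boolP [exists u, u \notin C]) => [/existsP[[a b] Hab]|/existsPn Hall].
  have [a' Ha'] := avoid1 (eq_leq (esym HI)) a.
  have Row : forall a b, (a, b) \notin C -> forall x, x != a -> forall j, j != b -> (x, j) \in C.
    move=> a0 b0 H0 x Hx j Hj.
    have H0' : (b0, a0) \notin CT C by rewrite inE.
    have [y Hy Hyj] := HT _ _ H0' j Hj.
    by rewrite inE /= in Hyj; rewrite (two_elt HI Hx Hy).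
  have Hsum : rc C a + rc C a' <= #|C|.
    by rewrite card_rows (bigD1 a) //= (bigD1 a') //= addnA leq_addr.
  have HJ1 : #|J| - 1 <= rc C a'.
    apply: leq_trans (_ : #|[set~ b]| <= _); first by rewrite cardsC1; lia.
    apply: subset_leq_card; apply/subsetP => j; rewrite !inE => Hj.
    exact: Row _ _ Hab _ Ha' _ Hj.
  case: (boolP ((a', b) \in C)) => Hab'.
    have : rc C a' = #|J|.
      rewrite /rc -cardsT; apply: eq_card => j; rewrite !inE.
      by case: (eqVneq j b) => [->//|Hj]; exact: Row _ _ Hab _ Ha' _ Hj.
    lia.
  have HJ2 : #|J| - 1 <= rc C a.
    apply: leq_trans (_ : #|[set~ b]| <= _); first by rewrite cardsC1; lia.
    apply: subset_leq_card; apply/subsetP => j; rewrite !inE => Hj.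
    have Haa : a != a' by rewrite eq_sym.
    exact: Row _ _ Hab' _ Haa _ Hj.
  lia.
have -> : C = setT by apply/setP => x; rewrite inE; exact: negbNE (Hall x).
rewrite cardsT card_prod; lia.
Qed.

Lemma full22 (I J : finType) (C : {set I*J}) : #|I| = 2 -> #|J| = 2 ->
  self_loc_dom (@gadj I J) C -> C = setT.
Proof.
move=> HI HJ S; apply/setP => -[a b]; rewrite inE; apply/negPn/negP => Hu.
have [a' Ha'] := avoid1 (eq_leq (esym HI)) a.
have [[c1 c2] [cC h1 h2 _ _]] := sld_elim (v:=(a',b)) S Hu
  ltac:(by rewrite xpair_eqE negb_and Ha').
have Hcu : (c1, c2) != (a, b) by apply: contraNneq Hu => <-.
have [[d1 d2] [dC g1 g2 hdc _]] := sld_elim (v:=(c1,c2)) S Hu Hcu.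
simpl in *.
by rewrite (two_elt HI g1 h1) (two_elt HJ g2 h2) eqxx in hdc.
Qed.

Lemma cross_sld (I J : finType) (z1 : I) (z2 : J) : 3 <= #|I| -> 3 <= #|J| ->
  self_loc_dom (@gadj I J) [set x | (x.1 == z1) || (x.2 == z2)].
Proof.
move=> HI HJ; apply: sld_intro.
- by apply/set0Pn; exists (z1, z2); rewrite inE eqxx.
- move=> [a b]; rewrite inE negb_or /= => /andP[Ha Hb].
  by exists (z1, z2); split; rewrite ?inE ?eqxx // eq_sym.
move=> [a b] [x y]; rewrite inE negb_or /= => /andP[Ha Hb] Hv.
have Haz : z1 != a by rewrite eq_sym.
have Hbz : z2 != b by rewrite eq_sym.
case: (eqVneq y b) => [Eyb|Hyb].
  subst y; have Hxa : x != a by move: Hv; rewrite xpair_eqE eqxx andbT.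
  case: (eqVneq x z1) => [Exz|Hxz].
    subst x; exists (z1, z2); split; rewrite /= ?inE ?eqxx //.
    by rewrite xpair_eqE negb_and Hbz orbT.
  exists (x, z2); split; rewrite /= ?inE ?eqxx ?orbT //.
  by rewrite xpair_eqE negb_and Hbz orbT.
case: (eqVneq y z2) => [Eyz|Hyz].
  subst y; have [i /andP[Hia Hix]] := avoid2 HI a x.
  exists (i, z2); split; rewrite /= ?inE ?eqxx ?orbT //.
  by rewrite xpair_eqE negb_and Hix.
case: (eqVneq x z1) => [Exz|Hxz].
  subst x; have [j /andP[Hjb Hjy]] := avoid2 HJ b y.
  exists (z1, j); split; rewrite /= ?inE ?eqxx ?orbT //.
  by rewrite xpair_eqE negb_and Hjy orbT.
exists (z1, y); split; rewrite /= ?inE ?eqxx ?orbT //.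
by rewrite xpair_eqE negb_and eq_sym Hxz.
Qed.

Lemma row_sld (I J : finType) (z1 : I) : #|I| = 2 -> 3 <= #|J| ->
  self_loc_dom (@gadj I J) [set x | x.1 == z1].
Proof.
move=> HI HJ; apply: sld_intro.
- have: 0 < #|J| by lia. case/card_gt0P => j _.
  by apply/set0Pn; exists (z1, j); rewrite inE eqxx.
- move=> [a b]; rewrite inE /= => Ha.
  have [j Hj] := avoid1 (ltnW HJ) b.
  by exists (z1, j); split; rewrite ?inE ?eqxx // eq_sym.
move=> [a b] [x y]; rewrite inE /= => Ha Hv.
have Haz : z1 != a by rewrite eq_sym.
case: (eqVneq y b) => [Eyb|Hyb].
  subst y; have Hxa : x != a by move: Hv; rewrite xpair_eqE eqxx andbT.
  have Exz := two_elt HI Hxa Haz; subst x.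
  have [j Hj] := avoid1 (ltnW HJ) b.
  exists (z1, j); split; rewrite /= ?inE ?eqxx //.
  by rewrite xpair_eqE negb_and Hj orbT.
case: (eqVneq x z1) => [Exz|Hxz].
  subst x; have [j /andP[Hjb Hjy]] := avoid2 HJ b y.
  exists (z1, j); split; rewrite /= ?inE ?eqxx ?orbT //.
  by rewrite xpair_eqE negb_and Hjy orbT.
exists (z1, y); split; rewrite /= ?inE ?eqxx ?orbT //.
by rewrite xpair_eqE negb_and eq_sym Hxz.
Qed.

Lemma gamma_eq (T : finType) (adj : rel T) L C0 : self_loc_dom adj C0 -> #|C0| = L ->
  L <= #|T| -> (forall C, self_loc_dom adj C -> L <= #|C|) -> gamma_SLD adj = L.
Proof.
move=> S0 E0 HT Hlb; apply/eqP; rewrite eqn_leq; apply/andP; split.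
  by rewrite -E0; apply: bigmin_le_seq => //; rewrite mem_index_enum.
rewrite /gamma_SLD; apply: (big_ind (fun x => L <= x)) => //.
by move=> x y Hx Hy; rewrite leq_min Hx Hy.
Qed.

Lemma card_cross (I J : finType) (z1 : I) (z2 : J) :
  #|[set x | (x.1 == z1) || (x.2 == z2)]| = #|J| + (#|I| - 1).
Proof.
rewrite card_rows (bigD1 z1) //=; congr (_ + _).
  by rewrite /rc -cardsT; apply: eq_card => j; rewrite !inE eqxx.
rewrite (eq_bigr (fun _ => 1)); last first.
  move=> i Hi; rewrite /rc -(cards1 z2); apply: eq_card => j; rewrite !inE /=.
  by rewrite (negbTE Hi).
rewrite sum_nat_cond_const muln1.
have ->: [set x | x != z1] = [set~ z1] by apply/setP => y; rewrite !inE.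
by rewrite cardsC1 subn1.
Qed.

Lemma card_row (I J : finType) (z1 : I) : #|[set x : I * J | x.1 == z1]| = #|J|.
Proof.
rewrite card_rows (bigD1 z1) //= big1 ?addn0.
  by rewrite /rc -cardsT; apply: eq_card => j; rewrite !inE eqxx.
move=> i Hi; apply/eqP; rewrite cards_eq0; apply/eqP/setP => j; rewrite !inE /=.
by rewrite (negbTE Hi).
Qed.

Lemma setT_sld (I J : finType) : 0 < #|I| -> 0 < #|J| -> self_loc_dom (@gadj I J) setT.
Proof.
move=> HI HJ; apply: sld_intro.
- case/card_gt0P: HI => i _; case/card_gt0P: HJ => j _.
  by apply/set0Pn; exists (i, j); rewrite inE.
- by move=> u; rewrite inE.
by move=> u v; rewrite inE.
Qed.

Theorem theorem19 (n m : nat) : 2 <= n -> n <= m ->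
  gamma_SLD (direct_prod (@K_adj n) (@K_adj m)) =
  (if 2 < n then m + n - 1 else if 2 < m then m else 4).
Proof.
move=> Hn Hnm.
have -> : direct_prod (@K_adj n) (@K_adj m) = @gadj 'I_n 'I_m by [].
have Hn0 : 0 < n by lia.
have Hm0 : 0 < m by lia.
pose z1 := Ordinal Hn0; pose z2 := Ordinal Hm0.
case: (ltnP 2 n) => H2n.
  rewrite /=; apply: (gamma_eq (C0 := [set x | (x.1 == z1) || (x.2 == z2)])).
  - by apply: cross_sld; rewrite card_ord; lia.
  - by rewrite card_cross !card_ord; lia.
  - by rewrite card_prod !card_ord; nia.
  move=> C S; have [H1 H2] := sld_HC S.
  have := lower3 (C := C); rewrite !card_ord addnC; exact.
have En : n = 2 by lia.
case: (ltnP 2 m) => H2m.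
  rewrite /=; apply: (gamma_eq (C0 := [set x : 'I_n * 'I_m | x.1 == z1])).
  - by apply: row_sld; rewrite card_ord; lia.
  - by rewrite card_row card_ord.
  - by rewrite card_prod !card_ord; nia.
  move=> C S; have [H1 H2] := sld_HC S.
  have := lower2 (C := C); rewrite !card_ord; move=> L2; exact: L2 En (ltnW H2m) H2.
have Em : m = 2 by lia.
rewrite /=; apply: (gamma_eq (C0 := setT)).
- by apply: setT_sld; rewrite card_ord.
- by rewrite cardsT card_prod !card_ord En Em.
- by rewrite card_prod !card_ord En Em.
move=> C S; rewrite (full22 _ _ S) ?card_ord //.
by rewrite cardsT card_prod !card_ord En Em.
Qed.
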